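(* For every $a\in S_A$ and every $b\in S_B$, the vertices $a$ and $b$ are adjacent in $\Gamma$.
   Context: All graphs are finite and simple. A graph $G$ is a minimal prime graph complement if $G$ has at least $2$ vertices and: (1) the complement $\overline{G}$ is connected; (2) $G$ is triangle-free; (3) $G$ is $3$-colorable; (4) for any two distinct nonadjacent vertices $u,v$ of $G$, adding the edge $uv$ to $G$ yields a graph that either contains a triangle or is not $3$-colorable. Standing setup: $\Gamma$ is a minimal prime graph complement with a vertex $X$ of degree $2$, whose two neighbors are $A$ and $B$. Among the vertices of $\Gamma$ other than $X,A,B$: $S_A$ is the set of those adjacent to $A$ but not $B$; $S_B$ the set of those adjacent to $B$ but not $A$; $S_Y$ the set of those adjacent to both $A$ and $B$; $S_Z$ the set of those adjacent to neither $A$ nor $B$. *)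

(* Defs.v *)
From mathcomp Require Import all_boot.
Set Implicit Arguments. Unset Strict Implicit. Unset Printing Implicit Defensive.

Definition simple_graph (T : finType) (e : rel T) : Prop :=
  symmetric e /\ irreflexive e.

Definition compl_rel (T : finType) (e : rel T) : rel T :=
  fun x y => (x != y) && ~~ e x y.

Definition connected_graph (T : finType) (e : rel T) : Prop :=
  forall x y : T, connect e x y.

Definition triangle_free (T : finType) (e : rel T) : Prop :=
  forall x y z : T, ~ [/\ e x y, e y z & e x z].

Definition three_colorable (T : finType) (e : rel T) : Prop :=
  exists f : T -> 'I_3, forall x y, e x y -> f x != f y.

Definition add_edge (T : finType) (e : rel T) (u v : T) : rel T :=
  fun x y => [|| e x y, (x == u) && (y == v) | (x == v) && (y == u)].

Definition minimal_prime_graph_complement (T : finType) (e : rel T) : Prop :=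
  [/\ 1 < #|T|,
      connected_graph (compl_rel e),
      triangle_free e,
      three_colorable e &
      forall u v : T, u != v -> ~~ e u v ->
        ~ triangle_free (add_edge e u v) \/ ~ three_colorable (add_edge e u v)].

Definition nbhd (T : finType) (e : rel T) (x : T) : {set T} := [set y | e x y].

Definition S_only (T : finType) (e : rel T) (X A B : T) : {set T} :=
  [set v | [&& v \notin [:: X; A; B], e v A & ~~ e v B]].

(* Main.v *)
Require Import Defs.
From mathcomp Require Import all_boot.

Section Aux.
Variables (T : finType) (e : rel T).
Hypothesis se : symmetric e.
Hypothesis ie : irreflexive e.
Hypothesis tf : triangle_free e.

Lemma tf_add (u v : T) : u != v -> ~~ e u v ->
  (forall w, ~~ (e u w && e w v)) -> triangle_free (add_edge e u v).
Proof.
move=> uv nuv nc x y z [].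
rewrite /add_edge.
have nc' : forall w, e u w -> e w v -> False.
  by move=> w h1 h2; move: (nc w); rewrite h1 h2.
have nc'' : forall w, e v w -> e w u -> False.
  by move=> w h1 h2; apply: (nc' w); rewrite se.
move=> /orP[Hxy|/orP[/andP[/eqP ? /eqP ?]|/andP[/eqP ? /eqP ?]]];
move=> /orP[Hyz|/orP[/andP[/eqP ? /eqP ?]|/andP[/eqP ? /eqP ?]]];
move=> /orP[Hxz|/orP[/andP[/eqP ? /eqP ?]|/andP[/eqP ? /eqP ?]]];
subst; rewrite ?eqxx in uv nuv; try done;
  try (by apply: (tf x y z));
  try (by move: Hxy; rewrite ie); try (by move: Hyz; rewrite ie);
  try (by move: Hxz; rewrite ie);
  try (by move: nuv; rewrite ?Hxy ?Hyz ?Hxz);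
  try (by move: nuv; rewrite se ?Hxy ?Hyz ?Hxz);
  try (by apply: (nc' _ Hxy); rewrite se);
  try (by apply: (nc' _ Hyz); rewrite se);
  try (by apply: (nc' _ Hxz); rewrite se);
  try (by apply: (nc' _ Hxy));
  try (by apply: (nc' _ Hyz));
  try (by apply: (nc' _ Hxz));
  try (by apply: (nc' x); rewrite se);
  try (by apply: (nc' y); rewrite se);
  try (by apply: (nc' z); rewrite se);
  try (by apply: (nc'' x); rewrite se);
  try (by apply: (nc'' y); rewrite se);
  try (by apply: (nc'' z); rewrite se);
  try (by apply: (nc' x) => //; rewrite se //);
  try (by apply: (nc'' x) => //; rewrite se //);
  try (by apply: (nc' y) => //; rewrite se //);
  try (by apply: (nc'' y) => //; rewrite se //);
  try (by apply: (nc' z) => //; rewrite se //);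
  try (by apply: (nc'' z) => //; rewrite se //).
Qed.

End Aux.

Definition col0 : 'I_3 := @Ordinal 3 0 isT.
Definition col1 : 'I_3 := @Ordinal 3 1 isT.
Definition col2 : 'I_3 := @Ordinal 3 2 isT.

Theorem lemma11 (T : finType) (e : rel T) (X A B : T) :
  simple_graph e ->
  minimal_prime_graph_complement e ->
  A != B ->
  nbhd e X = [set A; B] ->
  forall a b : T, a \in S_only e X A B -> b \in S_only e X B A -> e a b.
Proof.
move=> [se ie] [_ _ tf [f fP] mx] AB hN.
have eX : forall y, e X y = (y == A) || (y == B).
  by move=> y; have := congr1 (fun S : {set T} => y \in S) hN; rewrite /nbhd !inE.
have eXA : e X A by rewrite eX eqxx.
have eXB : e X B by rewrite eX eqxx orbT.
have nAB : ~~ e A B.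
  apply/negP=> h; apply: (tf X A B); split => //.
have key : forall w, w != X -> w != A -> w != B -> ~~ e w A -> ~~ e w B ->
    ~ three_colorable (add_edge e X w).
  move=> w wX wA wB nwA nwB.
  have Xw : X != w by rewrite eq_sym.
  have nXw : ~~ e X w by rewrite eX negb_or wA wB.
  have tfa : triangle_free (add_edge e X w).
    apply: tf_add => // z; rewrite eX; apply/negP => /andP[/orP[] /eqP -> h].
      by move: nwA; rewrite se h.
    by move: nwB; rewrite se h.
  by case: (mx X w Xw nXw).
have indep : forall x y, e x y -> x != X -> x != A -> x != B -> ~~ e x A ->
    ~~ e x B -> y != X -> y != A -> y != B -> ~~ e y A -> ~~ e y B -> False.
  move=> x y exy xX xA xB nxA nxB yX yA yB nyA nyB.
  have fxy := fP x y exy.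
  case: (eqVneq (f x) (f X)) => hx.
    apply: (key y yX yA yB nyA nyB); exists f => p q.
    rewrite /add_edge => /orP[/fP //|/orP[]/andP[/eqP -> /eqP ->]].
      by rewrite -hx.
    by rewrite -hx eq_sym.
  apply: (key x xX xA xB nxA nxB); exists f => p q.
  rewrite /add_edge => /orP[/fP //|/orP[]/andP[/eqP -> /eqP ->]].
    by rewrite eq_sym.
  by [].
pose g := fun v => if e v A then col2 else if e v B then col1 else col0.
have gP : forall x y, e x y -> g x != g y.
  move=> x y exy; rewrite /g.
  case: (boolP (e x A)) => hxA; case: (boolP (e y A)) => hyA.
  - by exfalso; apply: (tf x y A).
  - by case: (e y B).
  - by case: (e x B).
  case: (boolP (e x B)) => hxB; case: (boolP (e y B)) => hyB //.
  - by exfalso; apply: (tf x y B).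
  exfalso.
  have xA : x != A by apply/eqP => ?; subst x; move: hyA; rewrite se exy.
  have xB : x != B by apply/eqP => ?; subst x; move: hyB; rewrite se exy.
  have yA : y != A by apply/eqP => ?; subst y; move: hxA; rewrite exy.
  have yB : y != B by apply/eqP => ?; subst y; move: hxB; rewrite exy.
  have xX : x != X by apply/eqP => ?; subst x; move: hxA; rewrite eXA.
  have yX : y != X by apply/eqP => ?; subst y; move: hyA; rewrite eXA.
  exact: (indep x y exy xX xA xB hxA hxB yX yA yB hyA hyB).
move=> a b; rewrite /S_only !inE => /and3P[ha haA naB] /and3P[hb hbB nbA].
move: ha hb; rewrite !negb_or => /and3P[aX aA aB] /and3P[bX bB bA].
apply/negP => /negP nab.
have ab : a != b by apply/eqP => ?; subst b; move: nbA; rewrite haA.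
have gab : g a != g b by rewrite /g haA hbB (negbTE nbA).
have colab : three_colorable (add_edge e a b).
  exists g => p q; rewrite /add_edge => /orP[/gP //|/orP[]/andP[/eqP -> /eqP ->]] //.
  by rewrite eq_sym.
case: (mx a b ab nab) => [ntf|] //.
have [c /andP[eac ecb]] : exists c, e a c && e c b.
  case: (boolP [exists c, e a c && e c b]) => [/existsP //|].
  rewrite negb_exists => /forallP hc.
  by exfalso; apply: ntf; apply: tf_add => // w; apply: hc.
have ncA : ~~ e c A by apply/negP => h; apply: (tf a c A).
have ncB : ~~ e c B by apply/negP => h; apply: (tf c b B); split => //; rewrite se.
have cX : c != X by apply/eqP => ?; subst c; move: eac; rewrite se eX (negbTE aA) (negbTE aB).
have cA : c != A by apply/eqP => ?; subst c; move: nbA; rewrite se ecb.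
have cB : c != B by apply/eqP => ?; subst c; move: naB; rewrite eac.
apply: (key c cX cA cB ncA ncB); exists g => p q.
rewrite /add_edge => /orP[/gP //|/orP[]/andP[/eqP -> /eqP ->]];
  by rewrite /g eXA (negbTE ncA) (negbTE ncB).
Qed.
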